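(* Let $0<p_{\min}\le p_{\max}$ be vectors in $\mathbb{R}^n$, $\mathcal{D}_p=\{p:p_{\min}\le p\le p_{\max}\}$, and let $\mathcal{I}:\mathbb{R}^n_{\ge0}\to\mathbb{R}^n$ be differentiable and type-II standard with $\mathcal{I}(\mathcal{D}_p)\subseteq\mathcal{D}_p$. Let $f(x)=\ln\mathcal{I}(e^x)$ and define the matrix $B\in\mathbb{R}^{n\times n}$ by \[ B_{ij}=\max_{p\in\mathcal{D}_p}\Big|\frac{\partial\mathcal{I}_j(p)}{\partial p_i}\,\frac{p_i}{\mathcal{I}_j(p)}\Big|=\max_{x\in\ln\mathcal{D}_p}\Big|\frac{\partial f_j(x)}{\partial x_i}\Big|, \] and assume the spectral radius satisfies $\rho(B)<1$. Let $c\in\mathbb{R}^n$ with $c>0$, let $h:\mathbb{R}_{>0}\to\mathbb{R}^m$ be differentiable with each component strictly increasing (with positive derivative), and set \[ s=(I-B)^{-1}c,\qquad \kappa(p)=h\Big(\prod_{i=1}^n p_i^{s_i}\Big). \] Assume the problem $\min_{p\in\mathcal{D}_p}\kappa(p)$ s.t. $p\ge\mathcal{I}(p)$ is feasible. Then this problem is Fast-Lipschitz: the unique fixed point $p^\star=\mathcal{I}(p^\star)$ in $\mathcal{D}_p$ is its unique Pareto optimal solution.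
   Context: Inequalities are element-wise; $\ln,\exp$ act componentwise. $\mathcal{I}$ is type-II standard if for all $p,q\ge0$: $\mathcal{I}(p)>0$ (implied by two-sided scalability), (type-II monotonicity) $p\le q\Rightarrow\mathcal{I}(p)\ge\mathcal{I}(q)$, and (type-II scalability) for all $c>1$, $\mathcal{I}(cp)>(1/c)\mathcal{I}(p)$. For a vector objective, a feasible $p$ is Pareto optimal (minimization) if no feasible $q$ has $\kappa(q)\le\kappa(p)$, $\kappa(q)\neq\kappa(p)$. A problem is Fast-Lipschitz if its unique Pareto optimal solution is the unique solution of the fixed point equation of its constraint function. *)

(* Defs.v *)
(* classical reals. Vectors of R^n are functions nat -> R,
   only the coordinates 0..n-1 are meaningful; matrices are nat -> nat -> R. *)
From Stdlib Require Import Reals Lra.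
Open Scope R_scope.

Definition vec := nat -> R.
Definition mat := nat -> nat -> R.

Fixpoint rsum (n : nat) (f : nat -> R) : R :=
  match n with O => 0 | S n' => rsum n' f + f n' end.

Fixpoint rprod (n : nat) (f : nat -> R) : R :=
  match n with O => 1 | S n' => rprod n' f * f n' end.

Definition vle (n : nat) (p q : vec) : Prop := forall i, (i < n)%nat -> p i <= q i.
Definition vlt (n : nat) (p q : vec) : Prop := forall i, (i < n)%nat -> p i < q i.
Definition veq (n : nat) (p q : vec) : Prop := forall i, (i < n)%nat -> p i = q i.
Definition vconst (a : R) : vec := fun _ => a.
Definition vscale (c : R) (p : vec) : vec := fun i => c * p i.
Definition vexp (x : vec) : vec := fun i => exp (x i).
Definition vln (x : vec) : vec := fun i => ln (x i).

Definition ebasis (i : nat) : vec := fun k => if Nat.eqb k i then 1 else 0.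
Definition vaddt (p : vec) (t : R) (d : vec) : vec := fun k => p k + t * d k.

Definition type_II_standard (n : nat) (I : vec -> vec) : Prop :=
  (forall p, vle n (vconst 0) p -> vlt n (vconst 0) (I p)) /\
  (forall p q, vle n (vconst 0) p -> vle n (vconst 0) q ->
     vle n p q -> vle n (I q) (I p)) /\
  (forall p c, vle n (vconst 0) p -> 1 < c ->
     vlt n (vscale (1 / c) (I p)) (I (vscale c p))).

Definition frechet_diff_at (n : nat) (F : vec -> vec) (p : vec) : Prop :=
  exists J : mat, forall eps, 0 < eps -> exists delta, 0 < delta /\
    forall q, (forall k, (k < n)%nat -> Rabs (q k - p k) < delta) ->
      forall j, (j < n)%nat ->
        Rabs (F q j - F p j - rsum n (fun k => J j k * (q k - p k)))
          <= eps * rsum n (fun k => Rabs (q k - p k)).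

Definition partial_deriv (F : vec -> vec) (j i : nat) (p : vec) (l : R) : Prop :=
  derivable_pt_lim (fun t => F (vaddt p t (ebasis i)) j) 0 l.

Definition in_box (n : nat) (pmin pmax p : vec) : Prop := vle n pmin p /\ vle n p pmax.

(* a + i b is a complex eigenvector of B (nonzero) for eigenvalue al + i be *)
Definition complex_eigenvalue (n : nat) (B : mat) (al be : R) : Prop :=
  exists a b : vec, (exists i, (i < n)%nat /\ (a i <> 0 \/ b i <> 0)) /\
    (forall i, (i < n)%nat -> rsum n (fun j => B i j * a j) = al * a i - be * b i) /\
    (forall i, (i < n)%nat -> rsum n (fun j => B i j * b j) = be * a i + al * b i).

Definition spectral_radius_lt_1 (n : nat) (B : mat) : Prop :=
  forall al be, complex_eigenvalue n B al be -> al * al + be * be < 1.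

Definition feasible (n : nat) (pmin pmax : vec) (I : vec -> vec) (p : vec) : Prop :=
  in_box n pmin pmax p /\ vle n (I p) p.

Definition pareto_optimal (n m : nat) (pmin pmax : vec) (I : vec -> vec)
    (kappa : vec -> vec) (p : vec) : Prop :=
  feasible n pmin pmax I p /\
  ~ (exists q, feasible n pmin pmax I q /\ vle m (kappa q) (kappa p) /\
               ~ veq m (kappa q) (kappa p)).

(* Main.v *)
Require Import Defs.
From Stdlib Require Import Reals.
Open Scope R_scope.
From Stdlib Require Import Reals Lra Lia Classical FunctionalExtensionality ClassicalEpsilon.
Open Scope R_scope.

Lemma rsum_ext n f g : (forall i, (i < n)%nat -> f i = g i) -> rsum n f = rsum n g.
Proof. induction n; simpl; intros H; auto. rewrite IHn by (intros; apply H; lia). rewrite H by lia. reflexivity. Qed.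

Lemma rsum_le n f g : (forall i, (i < n)%nat -> f i <= g i) -> rsum n f <= rsum n g.
Proof. induction n; simpl; intros H; [lra|]. assert (rsum n f <= rsum n g) by (apply IHn; intros; apply H; lia). specialize (H n ltac:(lia)). lra. Qed.

Lemma rsum_plus n f g : rsum n (fun i => f i + g i) = rsum n f + rsum n g.
Proof. induction n; simpl; [lra|]. rewrite IHn. ring. Qed.

Lemma rsum_minus n f g : rsum n (fun i => f i - g i) = rsum n f - rsum n g.
Proof. induction n; simpl; [lra|]. rewrite IHn. ring. Qed.

Lemma rsum_scal n a f : rsum n (fun i => a * f i) = a * rsum n f.
Proof. induction n; simpl; [lra|]. rewrite IHn. ring. Qed.

Lemma rsum_zero n : rsum n (fun _ => 0) = 0.
Proof. induction n; simpl; [lra|]. rewrite IHn. ring. Qed.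

Lemma rsum_nonneg n f : (forall i, (i < n)%nat -> 0 <= f i) -> 0 <= rsum n f.
Proof. intros H. rewrite <- (rsum_zero n). apply rsum_le. auto. Qed.

Lemma rsum_pos n f : (forall i, (i < n)%nat -> 0 <= f i) -> (exists i, (i < n)%nat /\ 0 < f i) -> 0 < rsum n f.
Proof.
  induction n; simpl; intros H [i [Hi Hfi]]; [lia|].
  destruct (Nat.eq_dec i n) as [->|Hne].
  - assert (0 <= rsum n f) by (apply rsum_nonneg; intros; apply H; lia). lra.
  - assert (0 < rsum n f) by (apply IHn; [intros; apply H; lia| exists i; split; [lia|auto]]).
    specialize (H n ltac:(lia)). lra.
Qed.

Lemma rsum_eq0 n f : (forall i, (i < n)%nat -> 0 <= f i) -> rsum n f <= 0 -> forall i, (i < n)%nat -> f i = 0.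
Proof.
  intros H Hs i Hi. destruct (H i Hi) as [Hlt|Heq]; auto.
  exfalso. assert (0 < rsum n f) by (apply rsum_pos; eauto). lra.
Qed.

Lemma rsum_swap n m (F : nat -> nat -> R) :
  rsum n (fun j => rsum m (fun i => F i j)) = rsum m (fun i => rsum n (fun j => F i j)).
Proof.
  induction n; simpl.
  - rewrite rsum_zero. reflexivity.
  - rewrite IHn. rewrite <- rsum_plus. reflexivity.
Qed.

Lemma rsum_ebasis_out n i g : (n <= i)%nat -> rsum n (fun k => g k * ebasis i k) = 0.
Proof.
  intros H. rewrite <- (rsum_zero n). apply rsum_ext. intros k Hk. unfold ebasis.
  destruct (Nat.eqb_spec k i); [lia|]. ring.
Qed.

Lemma rsum_ebasis n i g : (i < n)%nat -> rsum n (fun k => g k * ebasis i k) = g i.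
Proof.
  induction n; intros H; [lia|]. simpl.
  destruct (Nat.eq_dec i n) as [->|Hne].
  - rewrite rsum_ebasis_out by lia. unfold ebasis. rewrite Nat.eqb_refl. ring.
  - rewrite IHn by lia. unfold ebasis. destruct (Nat.eqb_spec n i); [lia|]. ring.
Qed.

Lemma N_of_rho n (B : mat) : spectral_radius_lt_1 n B ->
  forall t v, 0 <= t <= 1 -> (forall i, (i < n)%nat -> v i = t * rsum n (fun j => B i j * v j)) ->
  forall i, (i < n)%nat -> v i = 0.
Proof.
  intros Hrho t v Ht Hv i Hi. apply NNPP. intros Hne.
  destruct (Req_dec t 0) as [Ht0|Ht0].
  - apply Hne. rewrite Hv by auto. rewrite Ht0. ring.
  - assert (Hev : complex_eigenvalue n B (/ t) 0).
    { exists v, (fun _ => 0). split; [exists i; split; auto|split].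
      - intros k Hk. rewrite (Hv k Hk). field. auto.
      - intros k Hk. rewrite (rsum_ext n _ (fun _ => 0)) by (intros; ring). rewrite rsum_zero. ring. }
    specialize (Hrho _ _ Hev).
    assert (1 <= / t). { rewrite <- Rinv_1. apply Rinv_le_contravar; lra. }
    nra.
Qed.

Fixpoint mn (k : nat) (f : nat -> R) : R :=
  match k with O => 1 | S k' => Rmin (mn k' f) (f k') end.

Lemma mn_le k f i : (i < k)%nat -> mn k f <= f i.
Proof.
  induction k; simpl; intros H; [lia|].
  destruct (Nat.eq_dec i k) as [->|]; [apply Rmin_r|].
  eapply Rle_trans; [apply Rmin_l|]. apply IHk; lia.
Qed.

Lemma mn_cases k f : mn k f = 1 \/ exists i, (i < k)%nat /\ mn k f = f i.
Proof.
  induction k; simpl; [auto|].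
  unfold Rmin. destruct (Rle_dec (mn k f) (f k)).
  - destruct IHk as [H|[i [Hi H]]]; [auto|right; exists i; split; [lia|auto]].
  - right; exists k; split; [lia|auto].
Qed.

Lemma mn_ge k f a : a <= 1 -> (forall i, (i < k)%nat -> a <= f i) -> a <= mn k f.
Proof.
  induction k; simpl; intros H1 H; auto.
  apply Rmin_glb; [apply IHk; auto|apply H; lia].
Qed.

Lemma continuity_Rmin f g : continuity f -> continuity g -> continuity (fun t => Rmin (f t) (g t)).
Proof.
  intros Hf Hg.
  assert (E : (fun t => Rmin (f t) (g t)) = (fun t => (f t + g t - Rabs (f t - g t)) * / 2)).
  { apply functional_extensionality; intros t. unfold Rmin. destruct (Rle_dec (f t) (g t)).
    - rewrite Rabs_left1 by lra. field.
    - rewrite Rabs_right by lra. field. }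
  rewrite E. intros t.
  apply (continuity_pt_mult (fun t => f t + g t - Rabs (f t - g t)) (fun _ => / 2)).
  - apply continuity_pt_minus; [apply continuity_pt_plus; auto|].
    apply (continuity_pt_comp (fun t => f t - g t) Rabs). apply continuity_pt_minus; auto.
    apply Rcontinuity_abs.
  - apply continuity_pt_const. intros a b; auto.
Qed.

Lemma continuity_mn k (F : nat -> R -> R) : (forall i, (i < k)%nat -> continuity (F i)) ->
  continuity (fun t => mn k (fun i => F i t)).
Proof.
  induction k; simpl; intros H.
  - apply continuity_const. intros a b; auto.
  - apply (continuity_Rmin (fun t => mn k (fun i => F i t)) (F k)). apply IHk; intros; apply H; lia. apply H; lia.
Qed.

Lemma Rabs_le_inv x a : Rabs x <= a -> - a <= x <= a.
Proof. intros H. destruct (Rcase_abs x); [rewrite Rabs_left in H|rewrite Rabs_right in H]; auto; lra. Qed.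
Lemma continuity_Rmax f g : continuity f -> continuity g -> continuity (fun t => Rmax (f t) (g t)).
Proof.
  intros Hf Hg.
  assert (E : (fun t => Rmax (f t) (g t)) = (fun t => (f t + g t + Rabs (f t - g t)) * / 2)).
  { apply functional_extensionality; intros t. unfold Rmax. destruct (Rle_dec (f t) (g t)).
    - rewrite Rabs_left1 by lra. field.
    - rewrite Rabs_right by lra. field. }
  rewrite E. intros t.
  apply (continuity_pt_mult (fun t => f t + g t + Rabs (f t - g t)) (fun _ => / 2)).
  - apply continuity_pt_plus; [apply continuity_pt_plus; auto|].
    apply (continuity_pt_comp (fun t => f t - g t) Rabs). apply continuity_pt_minus; auto.
    apply Rcontinuity_abs.
  - apply continuity_pt_const. intros a b; auto.
Qed.

Definition clamp (t : R) := Rmin 1 (Rmax 0 t).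

Lemma clamp_cont : continuity clamp.
Proof.
  unfold clamp. apply (continuity_Rmin (fun _ => 1) (fun t => Rmax 0 t)).
  - apply continuity_const. intros a b; auto.
  - apply (continuity_Rmax (fun _ => 0) (fun t => t)).
    + apply continuity_const. intros a b; auto.
    + apply derivable_continuous, derivable_id.
Qed.

Lemma clamp_in t : 0 <= clamp t <= 1.
Proof. unfold clamp, Rmin, Rmax. repeat destruct Rle_dec; lra. Qed.

Lemma clamp_id t : 0 <= t <= 1 -> clamp t = t.
Proof. intros. unfold clamp, Rmin, Rmax. repeat destruct Rle_dec; lra. Qed.

Lemma s_pos n (B : mat) (c s : vec) :
  (forall t v, 0 <= t <= 1 -> (forall i, (i < n)%nat -> v i = t * rsum n (fun j => B i j * v j)) ->
     forall i, (i < n)%nat -> v i = 0) ->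
  (forall i, (i < n)%nat -> 0 < c i) ->
  (forall i j, (i < n)%nat -> (j < n)%nat -> 0 <= B i j) ->
  (forall i, (i < n)%nat -> s i - rsum n (fun j => B i j * s j) = c i) ->
  forall (P : nat -> R -> R) (D : R -> R), continuity D -> (forall i, continuity (P i)) ->
    (forall t, Rle 0 t -> Rle t 1 -> D t <> 0) ->
    (forall t i, lt i n -> Rminus (P i t) (Rmult t (rsum n (fun j => Rmult (B i j) (P j t)))) = Rmult (D t) (c i)) ->
  forall i, (i < n)%nat -> 0 < s i.
Proof.
  intros HN Hc HB Hs P D HDc HPc HD0 HPD.
  set (x := fun t i => P i (clamp t) / D (clamp t)).
  assert (Hxc : forall i, continuity (fun t => x t i)).
  { intros i t. unfold x.
    apply (continuity_pt_div (fun t => P i (clamp t)) (fun t => D (clamp t))).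
    - apply (continuity_pt_comp clamp (P i)); [apply clamp_cont|apply HPc].
    - apply (continuity_pt_comp clamp D); [apply clamp_cont|apply HDc].
    - destruct (clamp_in t). apply HD0; auto. }
  assert (Hxe : forall t, 0 <= t <= 1 -> forall i, (i < n)%nat ->
            x t i - t * rsum n (fun j => B i j * x t j) = c i).
  { intros t Ht i Hi. unfold x. rewrite clamp_id by auto.
    rewrite (rsum_ext n _ (fun j => / D t * (B i j * P j t))) by (intros; field; apply HD0; lra).
    rewrite rsum_scal.
    assert (E := HPD t i Hi). assert (D t <> 0) by (apply HD0; lra).
    apply (Rmult_eq_reg_l (D t)); auto.
    transitivity (P i t - t * rsum n (fun j => B i j * P j t)); [field; auto|]. rewrite E. ring. }
  assert (Hxpos : forall t, 0 <= t <= 1 -> (forall i, (i < n)%nat -> 0 <= x t i) ->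
            forall i, (i < n)%nat -> c i <= x t i).
  { intros t Ht H0 i Hi. assert (E := Hxe t Ht i Hi).
    assert (0 <= t * rsum n (fun j => B i j * x t j)).
    { apply Rmult_le_pos; [lra|]. apply rsum_nonneg. intros j Hj. apply Rmult_le_pos; auto. }
    lra. }
  set (g := fun t => mn n (fun i => x t i)).
  assert (Hgc : continuity g) by (apply continuity_mn; auto).
  assert (Hg0 : forall t, 0 <= t <= 1 -> (forall i, (i < n)%nat -> 0 <= x t i) -> 0 < g t).
  { intros t Ht H0. unfold g. destruct (mn_cases n (fun i => x t i)) as [->|[i [Hi ->]]]; [lra|].
    specialize (Hxpos t Ht H0 i Hi). specialize (Hc i Hi). lra. }
  assert (Hg1 : 0 < g 1).
  { apply Rnot_le_lt. intros Hle.
    assert (Hpos0 : 0 < g 0).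
    { apply Hg0; [lra|]. intros i Hi. assert (E := Hxe 0 ltac:(lra) i Hi). specialize (Hc i Hi). lra. }
    destruct (IVT_cor g 0 1 Hgc ltac:(lra) ltac:(nra)) as [T [HT HgT]].
    assert (H0 : forall i, (i < n)%nat -> 0 <= x T i).
    { intros i Hi. rewrite <- HgT. apply mn_le; auto. }
    specialize (Hg0 T HT H0). lra. }
  assert (Hx1 : forall i, (i < n)%nat -> 0 < x 1 i).
  { intros i Hi. eapply Rlt_le_trans; [apply Hg1|]. apply mn_le; auto. }
  assert (Hsx : forall i, (i < n)%nat -> s i - x 1 i = 0).
  { apply (HN 1 (fun i => s i - x 1 i)); [lra|]. intros i Hi.
    rewrite (rsum_ext n _ (fun j => B i j * s j - B i j * x 1 j)) by (intros; ring).
    rewrite rsum_minus. assert (E1 := Hs i Hi). assert (E2 := Hxe 1 ltac:(lra) i Hi). lra. }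
  intros i Hi. specialize (Hsx i Hi). specialize (Hx1 i Hi). lra.
Qed.
Lemma frechet_local n F p q : frechet_diff_at n F p -> (forall k, (k < n)%nat -> q k = p k) ->
  forall j, (j < n)%nat -> F q j = F p j.
Proof.
  intros [J HJ] Hq j Hj. destruct (HJ 1 ltac:(lra)) as [d [Hd Hb]].
  assert (H := Hb q ltac:(intros k Hk; rewrite Hq by auto; rewrite Rminus_diag, Rabs_R0; auto) j Hj).
  rewrite (rsum_ext n _ (fun _ => 0)) in H by (intros k Hk; rewrite Hq by auto; ring).
  rewrite (rsum_ext n (fun k => Rabs (q k - p k)) (fun _ => 0)) in H by (intros k Hk; rewrite Hq by auto; rewrite Rminus_diag; apply Rabs_R0).
  rewrite rsum_zero in H. assert (H' : Rabs (F q j - F p j) <= 0) by (replace (F q j - F p j) with (F q j - F p j - 0) by ring; lra).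
  assert (H0 := Rabs_pos (F q j - F p j)).
  destruct (Rcase_abs (F q j - F p j)); [rewrite Rabs_left in H' by auto|rewrite Rabs_right in H' by auto]; lra.
Qed.

Lemma vaddt_zero p d : vaddt p 0 d = p.
Proof. apply functional_extensionality; intros k. unfold vaddt. ring. Qed.

Lemma frechet_partial n F p i j : frechet_diff_at n F p -> (i < n)%nat -> (j < n)%nat ->
  exists l, partial_deriv F j i p l.
Proof.
  intros [J HJ] Hi Hj. exists (J j i). unfold partial_deriv, derivable_pt_lim.
  intros eps Heps. destruct (HJ (eps / 2) ltac:(lra)) as [d [Hd Hb]].
  exists (mkposreal d Hd). intros h Hh0 Hh. simpl in Hh.
  rewrite Rplus_0_l, vaddt_zero.
  assert (Hq : forall k, (k < n)%nat -> Rabs (vaddt p h (ebasis i) k - p k) < d).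
  { intros k Hk. unfold vaddt, ebasis. destruct (Nat.eqb k i);
    [replace (p k + h * 1 - p k) with h by ring; auto|
     replace (p k + h * 0 - p k) with 0 by ring; rewrite Rabs_R0; auto]. }
  specialize (Hb _ Hq j Hj).
  rewrite (rsum_ext n _ (fun k => (h * J j k) * ebasis i k)) in Hb
    by (intros k Hk; unfold vaddt; ring).
  rewrite (rsum_ext n (fun k => Rabs (vaddt p h (ebasis i) k - p k)) (fun k => Rabs h * ebasis i k)) in Hb.
  2:{ intros k Hk. unfold vaddt, ebasis. destruct (Nat.eqb k i).
      replace (p k + h * 1 - p k) with h by ring; ring.
      replace (p k + h * 0 - p k) with 0 by ring; rewrite Rabs_R0; ring. }
  rewrite !rsum_ebasis in Hb by auto.
  set (a := F (vaddt p h (ebasis i)) j - F p j) in *.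
  replace (a / h - J j i) with ((a - h * J j i) / h) by (field; auto).
  unfold Rdiv. rewrite Rabs_mult, Rabs_inv.
  assert (0 < Rabs h) by (apply Rabs_pos_lt; auto).
  apply (Rmult_lt_reg_r (Rabs h)); auto. rewrite Rmult_assoc, Rinv_l by lra.
  assert (eps / 2 * Rabs h < eps * Rabs h) by nra. lra.
Qed.

Lemma derivable_shift f x l : derivable_pt_lim (fun t => f (x + t)) 0 l -> derivable_pt_lim f x l.
Proof.
  unfold derivable_pt_lim. intros H eps Heps. destruct (H eps Heps) as [d Hd].
  exists d. intros h Hh0 Hh. specialize (Hd h Hh0 Hh). rewrite Rplus_0_l, Rplus_0_r in Hd. auto.
Qed.

Definition upd (r : vec) (k : nat) (y : R) : vec := fun i => if Nat.eqb i k then y else r i.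

Lemma vaddt_upd r k y t : vaddt (upd r k y) t (ebasis k) = upd r k (y + t).
Proof.
  apply functional_extensionality; intros i. unfold vaddt, upd, ebasis.
  destruct (Nat.eqb i k); ring.
Qed.

Lemma upd_at r k y : upd r k y k = y.
Proof. unfold upd. rewrite Nat.eqb_refl. auto. Qed.
Section Lip.
Variables (n : nat) (pmin pmax : vec) (I : vec -> vec) (B : mat).
Hypothesis Hpmin : vlt n (vconst 0) pmin.
Hypothesis HI : type_II_standard n I.
Hypothesis Hdiff : forall p, vlt n (vconst 0) p -> frechet_diff_at n I p.
Hypothesis HBub : forall i j, (i < n)%nat -> (j < n)%nat ->
     forall p l, in_box n pmin pmax p -> partial_deriv I j i p l ->
       Rabs (l * p i / I p j) <= B i j.

Lemma box_pos p : in_box n pmin pmax p -> vlt n (vconst 0) p.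
Proof. intros [H1 H2] i Hi. specialize (Hpmin i Hi). specialize (H1 i Hi). unfold vconst in *. lra. Qed.

Lemma box_nonneg p : in_box n pmin pmax p -> vle n (vconst 0) p.
Proof. intros H i Hi. apply Rlt_le, box_pos; auto. Qed.

Lemma I_pos p j : vle n (vconst 0) p -> (j < n)%nat -> 0 < I p j.
Proof. intros H Hj. destruct HI as [H1 _]. apply (H1 p H j Hj). Qed.

Lemma anti p q : in_box n pmin pmax p -> in_box n pmin pmax q -> vle n p q -> vle n (I q) (I p).
Proof. intros Hp Hq H. destruct HI as [_ [H2 _]]. apply H2; auto; apply box_nonneg; auto. Qed.

Lemma step r k j y1 y2 : (k < n)%nat -> (j < n)%nat ->
  (forall i, (i < n)%nat -> i <> k -> pmin i <= r i <= pmax i) ->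
  pmin k <= y1 <= pmax k -> pmin k <= y2 <= pmax k ->
  Rabs (ln (I (upd r k y1) j) - ln (I (upd r k y2) j)) <= B k j * Rabs (ln y1 - ln y2).
Proof.
  intros Hk Hj Hr Hy1 Hy2.
  set (phi := fun u => ln (I (upd r k (exp u)) j)).
  assert (Hpos : forall u, vlt n (vconst 0) (upd r k (exp u))).
  { intros u i Hi. unfold upd, vconst. destruct (Nat.eqb_spec i k). apply exp_pos.
    specialize (Hr i Hi n0). specialize (Hpmin i Hi). unfold vconst in Hpmin. lra. }
  assert (Hder : forall u, exists d, derivable_pt_lim phi u d /\
            (pmin k <= exp u <= pmax k -> Rabs d <= B k j)).
  { intros u. destruct (frechet_partial n I (upd r k (exp u)) k j (Hdiff _ (Hpos u)) Hk Hj) as [l Hl].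
    assert (HIp : 0 < I (upd r k (exp u)) j) by (apply I_pos; auto; intros i Hi; apply Rlt_le, Hpos; auto).
    exists (/ I (upd r k (exp u)) j * (l * exp u)). split.
    - change phi with (comp ln (comp (fun y => I (upd r k y) j) exp)).
      apply derivable_pt_lim_comp; [apply derivable_pt_lim_comp|].
      + apply derivable_pt_lim_exp.
      + apply derivable_shift. unfold partial_deriv in Hl.
        assert (E : (fun t => I (vaddt (upd r k (exp u)) t (ebasis k)) j) = (fun t => I (upd r k (exp u + t)) j))
          by (apply functional_extensionality; intros t; rewrite vaddt_upd; auto).
        rewrite E in Hl. exact Hl.
      + apply derivable_pt_lim_ln. exact HIp.
    - intros Hu.
      assert (Hb : in_box n pmin pmax (upd r k (exp u))).
      { split; intros i Hi; unfold upd; destruct (Nat.eqb_spec i k) as [->|Hne];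
        try lra; specialize (Hr i Hi Hne); lra. }
      specialize (HBub k j Hk Hj _ l Hb Hl). rewrite upd_at in HBub.
      replace (/ I (upd r k (exp u)) j * (l * exp u)) with (l * exp u / I (upd r k (exp u)) j) by (unfold Rdiv; ring).
      exact HBub. }
  assert (Hf : forall u, {d | derivable_pt_lim phi u d /\ (pmin k <= exp u <= pmax k -> Rabs d <= B k j)})
    by (intros u; apply constructive_indefinite_description; auto).
  set (f' := fun u => proj1_sig (Hf u)).
  assert (Hmvt : forall a b, a < b -> pmin k <= exp a -> exp b <= pmax k ->
            Rabs (phi b - phi a) <= B k j * (b - a)).
  { intros a b Hab Ha Hb.
    destruct (MVT_cor2 phi f' a b Hab) as [xi [E Hxi]].
    { intros x Hx. unfold f'. exact (proj1 (proj2_sig (Hf x))). }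
    rewrite E. pose proof (proj2 (proj2_sig (Hf xi))) as Hd. fold (f' xi) in Hd.
    assert (exp a < exp xi) by (apply exp_increasing; lra).
    assert (exp xi < exp b) by (apply exp_increasing; lra).
    specialize (Hd ltac:(lra)).
    rewrite Rabs_mult, (Rabs_right (b - a)) by lra. apply Rmult_le_compat_r; lra. }
  assert (Hp1 : 0 < y1) by (specialize (Hpmin k Hk); unfold vconst in Hpmin; lra).
  assert (Hp2 : 0 < y2) by (specialize (Hpmin k Hk); unfold vconst in Hpmin; lra).
  assert (E1 : ln (I (upd r k y1) j) = phi (ln y1)) by (unfold phi; rewrite exp_ln; auto).
  assert (E2 : ln (I (upd r k y2) j) = phi (ln y2)) by (unfold phi; rewrite exp_ln; auto).
  rewrite E1, E2.
  destruct (Rtotal_order (ln y1) (ln y2)) as [Hlt|[Heq|Hgt]].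
  - rewrite Rabs_minus_sym, (Rabs_minus_sym (ln y1)), (Rabs_right (ln y2 - ln y1)) by lra.
    apply Hmvt; auto; rewrite exp_ln; lra.
  - rewrite Heq, !Rminus_diag, Rabs_R0. lra.
  - rewrite (Rabs_right (ln y1 - ln y2)) by lra.
    apply Hmvt; auto; rewrite exp_ln; lra.
Qed.

Definition path (p q : vec) (m : nat) : vec := fun i => if Nat.ltb i m then q i else p i.

Lemma Lip p q j : in_box n pmin pmax p -> in_box n pmin pmax q -> (j < n)%nat ->
  Rabs (ln (I q j) - ln (I p j)) <= rsum n (fun i => B i j * Rabs (ln (p i) - ln (q i))).
Proof.
  intros Hp Hq Hj.
  assert (Hbox : forall m, in_box n pmin pmax (path p q m)).
  { intros m. destruct Hp as [Hp1 Hp2], Hq as [Hq1 Hq2].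
    split; intros i Hi; unfold path; destruct (Nat.ltb i m); auto. }
  assert (Hind : forall m, (m <= n)%nat ->
    Rabs (ln (I (path p q m) j) - ln (I p j)) <= rsum m (fun i => B i j * Rabs (ln (p i) - ln (q i)))).
  { induction m; intros Hm.
    - assert (E : path p q 0 = p) by (apply functional_extensionality; intros i; reflexivity).
      rewrite E, Rminus_diag, Rabs_R0. simpl. lra.
    - simpl. specialize (IHm ltac:(lia)).
      assert (E1 : path p q (S m) = upd (path p q m) m (q m)).
      { apply functional_extensionality; intros i. unfold path, upd.
        destruct (Nat.eqb_spec i m) as [->|Hne].
        - rewrite (proj2 (Nat.ltb_lt m (S m))) by lia. auto.
        - destruct (Nat.ltb_spec i (S m)), (Nat.ltb_spec i m); auto; lia. }
      assert (E2 : path p q m = upd (path p q m) m (p m)).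
      { apply functional_extensionality; intros i. unfold path, upd.
        destruct (Nat.eqb_spec i m) as [->|Hne]; auto.
        rewrite (proj2 (Nat.ltb_ge m m)) by lia. auto. }
      assert (Hs := step (path p q m) m j (q m) (p m) ltac:(lia) Hj
                    ltac:(intros i Hi _; destruct (Hbox m) as [H1 H2]; split; auto)
                    ltac:(destruct Hq as [H1 H2]; split; auto)
                    ltac:(destruct Hp as [H1 H2]; split; auto)).
      rewrite <- E1, <- E2 in Hs. rewrite (Rabs_minus_sym (ln (q m))) in Hs.
      replace (ln (I (path p q (S m)) j) - ln (I p j)) with
        ((ln (I (path p q (S m)) j) - ln (I (path p q m) j)) + (ln (I (path p q m) j) - ln (I p j))) by ring.
      eapply Rle_trans; [apply Rabs_triang|].
      lra. }
  specialize (Hind n (le_n n)).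
  assert (Eq : I (path p q n) j = I q j).
  { assert (Hv1 : vle n (path p q n) q) by (intros i Hi; unfold path; rewrite (proj2 (Nat.ltb_lt i n)) by lia; lra).
    assert (Hv2 : vle n q (path p q n)) by (intros i Hi; unfold path; rewrite (proj2 (Nat.ltb_lt i n)) by lia; lra).
    assert (H1 := anti _ _ (Hbox n) Hq Hv1 j Hj). assert (H2 := anti _ _ Hq (Hbox n) Hv2 j Hj). lra. }
  rewrite Eq in Hind. exact Hind.
Qed.


Lemma ln_le_mono x y : 0 < x -> x <= y -> ln x <= ln y.
Proof. intros Hx [H|H]; [apply Rlt_le, ln_increasing; auto| subst; lra]. Qed.

Lemma exp_le_mono x y : x <= y -> exp x <= exp y.
Proof. intros [H|H]; [apply Rlt_le, exp_increasing; auto| subst; lra]. Qed.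

Lemma lim_le u l x : Un_cv u l -> (forall k, u k <= x) -> l <= x.
Proof.
  intros Hu H. apply Rnot_lt_le. intros Hlt.
  destruct (Hu (l - x) ltac:(lra)) as [N HN]. specialize (HN N (le_n N)). specialize (H N).
  unfold R_dist in HN. apply Rabs_def2 in HN. lra.
Qed.

Lemma lim_ge u l x : Un_cv u l -> (forall k, x <= u k) -> x <= l.
Proof.
  intros Hu H. apply Rnot_lt_le. intros Hlt.
  destruct (Hu (x - l) ltac:(lra)) as [N HN]. specialize (HN N (le_n N)). specialize (H N).
  unfold R_dist in HN. apply Rabs_def2 in HN. lra.
Qed.

Lemma lim_le' u l x : Un_cv u l -> (forall k, u k <= x) -> l <= x.
Proof. apply lim_le. Qed.
Lemma lim_ge' u l x : Un_cv u l -> (forall k, x <= u k) -> x <= l.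
Proof. apply lim_ge. Qed.

Variables (c s : vec).
Hypothesis Hple : vle n pmin pmax.
Hypothesis Hinv : forall p, in_box n pmin pmax p -> in_box n pmin pmax (I p).
Hypothesis HBnn : forall i j, (i < n)%nat -> (j < n)%nat -> 0 <= B i j.
Hypothesis Hc : vlt n (vconst 0) c.
Hypothesis Hs : forall i, (i < n)%nat -> s i - rsum n (fun j => B i j * s j) = c i.
Hypothesis Hsp : forall i, (i < n)%nat -> 0 < s i.

Lemma weighted n' (w : vec) : n' = n ->
  rsum n (fun j => s j * rsum n (fun i => B i j * w i)) = rsum n (fun i => w i * (s i - c i)).
Proof.
  intros _.
  rewrite (rsum_ext n _ (fun j => rsum n (fun i => B i j * w i * s j))) by (intros; rewrite <- rsum_scal; apply rsum_ext; intros; ring).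
  rewrite rsum_swap. apply rsum_ext. intros i Hi. rewrite <- (Hs i Hi).
  replace (s i - (s i - rsum n (fun j => B i j * s j))) with (rsum n (fun j => B i j * s j)) by ring.
  rewrite <- rsum_scal. apply rsum_ext. intros; ring.
Qed.

Lemma SL pstar p : in_box n pmin pmax pstar -> veq n (I pstar) pstar ->
  in_box n pmin pmax p -> vle n (I p) p -> ~ veq n p pstar ->
  rsum n (fun i => s i * ln (pstar i)) < rsum n (fun i => s i * ln (p i)).
Proof.
  intros Hbs Hfix Hbp Hfeas Hne.
  assert (Pp := box_pos _ Hbp). assert (Ps := box_pos _ Hbs). unfold vconst in Pp, Ps.
  set (d := fun i => ln (p i) - ln (pstar i)).
  set (dp := fun i => Rmax 0 (d i)).
  set (q := fun i => Rmax (p i) (pstar i)).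
  assert (Hbq : in_box n pmin pmax q).
  { destruct Hbp as [A1 A2], Hbs as [B1 B2]. split; intros i Hi; unfold q, Rmax; destruct Rle_dec; auto. }
  assert (Hpq : vle n p q) by (intros i Hi; unfold q; apply Rmax_l).
  assert (Hlnq : forall i, (i < n)%nat -> ln (pstar i) - ln (q i) = - dp i).
  { intros i Hi. unfold dp, d, q, Rmax. specialize (Pp i Hi). specialize (Ps i Hi).
    destruct (Rle_dec (p i) (pstar i)) as [H1|H1]; destruct (Rle_dec 0 (ln (p i) - ln (pstar i))) as [H2|H2].
    - assert (ln (p i) <= ln (pstar i)) by (apply ln_le_mono; auto). lra.
    - ring.
    - ring.
    - assert (ln (pstar i) < ln (p i)) by (apply ln_increasing; lra). lra. }
  assert (Hdp0 : forall i, 0 <= dp i) by (intros; apply Rmax_l).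
  set (T := fun j => rsum n (fun i => B i j * dp i)).
  assert (HT0 : forall j, (j < n)%nat -> 0 <= T j).
  { intros j Hj. apply rsum_nonneg. intros i Hi. apply Rmult_le_pos; auto. }
  assert (Hdj : forall j, (j < n)%nat -> - T j <= d j).
  { intros j Hj.
    assert (HL := Lip pstar q j Hbs Hbq Hj).
    rewrite (rsum_ext n _ (fun i => B i j * dp i)) in HL.
    2:{ intros i Hi. rewrite Hlnq by auto. rewrite Rabs_Ropp, Rabs_right by (apply Rle_ge; auto). auto. }
    fold (T j) in HL. apply Rabs_le_inv in HL.
    assert (H1 := anti _ _ Hbp Hbq Hpq j Hj).
    assert (H2 := Hfeas j Hj). rewrite (Hfix j Hj) in HL.
    assert (0 < I q j) by (apply I_pos; auto; apply box_nonneg; auto).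
    assert (ln (I q j) <= ln (p j)) by (apply ln_le_mono; auto; lra).
    unfold d. lra. }
  assert (Hkey : forall j, (j < n)%nat -> s j * dp j - s j * T j <= s j * d j).
  { intros j Hj. specialize (Hdj j Hj). specialize (HT0 j Hj). assert (Hsj := Hsp j Hj).
    unfold dp, Rmax. destruct Rle_dec; nra. }
  assert (Hsum : rsum n (fun i => c i * dp i) <= rsum n (fun i => s i * d i)).
  { eapply Rle_trans; [|apply rsum_le; exact Hkey]. rewrite rsum_minus.
    unfold T. rewrite (weighted n dp eq_refl). rewrite <- rsum_minus.
    apply Req_le, rsum_ext. intros; ring. }
  assert (Ed : rsum n (fun i => s i * d i) = rsum n (fun i => s i * ln (p i)) - rsum n (fun i => s i * ln (pstar i))).
  { rewrite <- rsum_minus. apply rsum_ext. intros; unfold d; ring. }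
  destruct (classic (exists i, (i < n)%nat /\ 0 < d i)) as [[i [Hi Hdi]]|Hno].
  - assert (0 < rsum n (fun i => c i * dp i)).
    { apply rsum_pos. intros k Hk. apply Rmult_le_pos; auto. specialize (Hc k Hk). unfold vconst in Hc. lra.
      exists i. split; auto. apply Rmult_lt_0_compat. specialize (Hc i Hi). unfold vconst in Hc. lra.
      unfold dp. eapply Rlt_le_trans; [exact Hdi|apply Rmax_r]. }
    lra.
  - exfalso. apply Hne. intros i Hi.
    assert (Hdi : d i <= 0) by (apply Rnot_lt_le; intros H; apply Hno; exists i; auto).
    assert (HT : T i = 0).
    { unfold T. rewrite <- (rsum_zero n). apply rsum_ext. intros k Hk.
      assert (d k <= 0) by (apply Rnot_lt_le; intros H; apply Hno; exists k; auto).
      unfold dp. rewrite Rmax_left by auto. ring. }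
    specialize (Hdj i Hi). rewrite HT in Hdj.
    apply ln_inv; auto. unfold d in *. lra.
Qed.

Fixpoint ab (k : nat) : vec * vec :=
  match k with O => (pmin, pmax) | S k' => (I (snd (ab k')), I (fst (ab k'))) end.

Lemma fin_ev (P : nat -> nat -> Prop) m :
  (forall i, (i < m)%nat -> exists N, forall k, (N <= k)%nat -> P i k) ->
  exists N, forall i, (i < m)%nat -> forall k, (N <= k)%nat -> P i k.
Proof.
  induction m; intros H.
  - exists O. intros; lia.
  - destruct IHm as [N1 H1]. intros; apply H; lia.
    destruct (H m ltac:(lia)) as [N2 H2].
    exists (Nat.max N1 N2). intros i Hi k Hk.
    destruct (Nat.eq_dec i m) as [->|]. apply H2; lia. apply H1; lia.
Qed.

Lemma le_eps x K : 0 <= K -> (forall e, 0 < e -> x <= e * K) -> x <= 0.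
Proof.
  intros HK H. apply Rnot_lt_le. intros Hx.
  specialize (H (x / (K + 1)) ltac:(apply Rdiv_lt_0_compat; lra)).
  assert (x / (K + 1) * K < x).
  { unfold Rdiv. apply (Rmult_lt_reg_r (K + 1)); [lra|].
    replace (x * / (K + 1) * K * (K + 1)) with (x * K) by (field; lra). nra. }
  lra.
Qed.

Lemma exists_fix : exists pstar, in_box n pmin pmax pstar /\ veq n (I pstar) pstar.
Proof.
  set (a := fun k => fst (ab k)). set (b := fun k => snd (ab k)).
  assert (Hbox0 : in_box n pmin pmax pmin /\ in_box n pmin pmax pmax).
  { split; split; intros i Hi; auto; lra. }
  assert (Hbox : forall k, in_box n pmin pmax (a k) /\ in_box n pmin pmax (b k)).
  { induction k; simpl; auto. destruct IHk. unfold a, b in *; simpl. split; apply Hinv; auto. }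
  assert (Hmono : forall k, vle n (a k) (a (S k)) /\ vle n (b (S k)) (b k)).
  { induction k.
    - split; intros i Hi; unfold a, b; simpl.
      + destruct (Hinv pmax (proj2 Hbox0)) as [H _]. apply H; auto.
      + destruct (Hinv pmin (proj1 Hbox0)) as [_ H]. apply H; auto.
    - destruct IHk as [H1 H2]. split.
      + apply (anti (b (S k)) (b k)); auto; apply Hbox.
      + apply (anti (a k) (a (S k))); auto; apply Hbox. }
  assert (Hab : forall k, vle n (a k) (b k)).
  { induction k. intros i Hi; unfold a, b; simpl; auto.
    apply (anti (a k) (b k)); auto; apply Hbox. }
  assert (Hmono2 : forall k m, (k <= m)%nat -> vle n (a k) (a m) /\ vle n (b m) (b k)).
  { intros k m Hkm. induction Hkm. split; intros i Hi; lra.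
    destruct IHHkm as [H1 H2]. destruct (Hmono m) as [H3 H4].
    split; intros i Hi; [specialize (H1 i Hi); specialize (H3 i Hi)|specialize (H2 i Hi); specialize (H4 i Hi)]; lra. }
  assert (Habm : forall k m, vle n (a k) (b m)).
  { intros k m i Hi. destruct (Hmono2 k (Nat.max k m) ltac:(lia)) as [H1 _].
    destruct (Hmono2 m (Nat.max k m) ltac:(lia)) as [_ H2].
    specialize (H1 i Hi). specialize (H2 i Hi). specialize (Hab (Nat.max k m) i Hi). lra. }
  assert (Hpos : forall k i, (i < n)%nat -> 0 < a k i /\ 0 < b k i).
  { intros k i Hi. split; apply (box_pos _ (proj1 (Hbox k)) i Hi) || apply (box_pos _ (proj2 (Hbox k)) i Hi). }
  assert (HA : forall i, exists l, (i < n)%nat -> Un_cv (fun k => ln (a k i)) l).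
  { intros i. destruct (Nat.ltb_spec i n) as [Hi|Hi]; [|exists 0; intros; lia].
    assert (Hg : Un_growing (fun k => ln (a k i))).
    { intros k. apply ln_le_mono. apply Hpos; auto. apply (proj1 (Hmono k)); auto. }
    assert (Hb : has_ub (fun k => ln (a k i))).
    { exists (ln (pmax i)). intros x [k ->]. apply ln_le_mono. apply Hpos; auto. apply (proj1 (Hbox k)); auto. }
    destruct (growing_cv _ Hg Hb) as [l Hl]. exists l; auto. }
  assert (HB : forall i, exists l, (i < n)%nat -> Un_cv (fun k => ln (b k i)) l).
  { intros i. destruct (Nat.ltb_spec i n) as [Hi|Hi]; [|exists 0; intros; lia].
    assert (Hg : Un_decreasing (fun k => ln (b k i))).
    { intros k. apply ln_le_mono. apply Hpos; auto. apply (proj2 (Hmono k)); auto. }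
    assert (Hb : has_lb (fun k => ln (b k i))).
    { exists (- ln (pmin i)). intros x [k ->]. apply Ropp_le_contravar. apply ln_le_mono.
      apply Hpmin; auto. apply (proj2 (Hbox k)); auto. }
    destruct (decreasing_cv _ Hg Hb) as [l Hl]. exists l; auto. }
  set (LA := fun i => proj1_sig (constructive_indefinite_description _ (HA i))).
  set (LB := fun i => proj1_sig (constructive_indefinite_description _ (HB i))).
  assert (HLA : forall i, (i < n)%nat -> Un_cv (fun k => ln (a k i)) (LA i))
    by (intros i; exact (proj2_sig (constructive_indefinite_description _ (HA i)))).
  assert (HLB : forall i, (i < n)%nat -> Un_cv (fun k => ln (b k i)) (LB i))
    by (intros i; exact (proj2_sig (constructive_indefinite_description _ (HB i)))).
  assert (HaLA : forall k i, (i < n)%nat -> ln (a k i) <= LA i).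
  { intros k i Hi. apply (growing_ineq (fun k => ln (a k i))); auto.
    intros m. apply ln_le_mono. apply Hpos; auto. apply (proj1 (Hmono m)); auto. }
  assert (HbLB : forall k i, (i < n)%nat -> LB i <= ln (b k i)).
  { intros k i Hi. apply (decreasing_ineq (fun k => ln (b k i))); auto.
    intros m. apply ln_le_mono. apply Hpos; auto. apply (proj2 (Hmono m)); auto. }
  set (d := fun i => LB i - LA i).
  assert (Hd0 : forall i, (i < n)%nat -> 0 <= d i).
  { intros i Hi. unfold d. assert (LA i <= LB i); [|lra].
    apply (lim_ge _ _ _ (HLB i Hi)). intros m.
    apply (lim_le _ _ _ (HLA i Hi)). intros k. apply ln_le_mono. apply Hpos; auto. apply Habm; auto. }
  assert (Hdj : forall j, (j < n)%nat -> d j - rsum n (fun i => B i j * d i) <= 0).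
  { intros j Hj. apply (le_eps _ (2 * rsum n (fun i => B i j))).
    { apply Rmult_le_pos; [lra|]. apply rsum_nonneg; intros; auto. }
    intros e He.
    destruct (fin_ev (fun i k => LA i - ln (a k i) < e /\ ln (b k i) - LB i < e) n) as [N HN].
    { intros i Hi. destruct (HLA i Hi e He) as [N1 H1]. destruct (HLB i Hi e He) as [N2 H2].
      exists (Nat.max N1 N2). intros k Hk. specialize (H1 k ltac:(lia)). specialize (H2 k ltac:(lia)).
      unfold R_dist in H1, H2. apply Rabs_def2 in H1. apply Rabs_def2 in H2. lra. }
    assert (E1 := HbLB (S N) j Hj). assert (E2 := HaLA (S N) j Hj).
    assert (Ea : a (S N) = I (b N)) by reflexivity. assert (Eb : b (S N) = I (a N)) by reflexivity.
    rewrite Ea in E2. rewrite Eb in E1.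
    assert (HL := Lip (b N) (a N) j (proj2 (Hbox N)) (proj1 (Hbox N)) Hj).
    apply Rabs_le_inv in HL.
    assert (Hr : rsum n (fun i => B i j * Rabs (ln (b N i) - ln (a N i))) <=
                 rsum n (fun i => B i j * d i) + e * (2 * rsum n (fun i => B i j))).
    { rewrite <- rsum_scal, <- rsum_scal, <- rsum_plus. apply rsum_le. intros i Hi.
      assert (Hl : ln (a N i) <= ln (b N i)) by (apply ln_le_mono; [apply Hpos; auto|apply Hab; auto]).
      rewrite Rabs_right by lra. destruct (HN i Hi N (le_n N)) as [H1 H2].
      assert (HBij := HBnn i j Hi Hj). unfold d. nra. }
    unfold d at 1. lra. }
  assert (Hd : forall i, (i < n)%nat -> d i = 0).
  { assert (Hw : rsum n (fun j => s j * d j) <= rsum n (fun j => s j * rsum n (fun i => B i j * d i))).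
    { apply rsum_le. intros j Hj. specialize (Hdj j Hj). specialize (Hsp j Hj). nra. }
    rewrite (weighted n d eq_refl) in Hw.
    assert (Hcd : rsum n (fun i => c i * d i) <= 0).
    { replace (rsum n (fun i => c i * d i)) with (rsum n (fun j => s j * d j) - rsum n (fun i => d i * (s i - c i))).
      lra. rewrite <- rsum_minus. apply rsum_ext. intros; ring. }
    intros i Hi.
    assert (H0 := rsum_eq0 n (fun i => c i * d i) ltac:(intros k Hk; apply Rmult_le_pos; [specialize (Hc k Hk); unfold vconst in Hc; lra|auto]) Hcd i Hi).
    simpl in H0. specialize (Hc i Hi). unfold vconst in Hc. apply Rmult_integral in H0. destruct H0; [lra|auto]. }
  set (pstar := fun i => exp (LA i)).
  assert (Hlo : forall k, vle n (a k) pstar).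
  { intros k i Hi. unfold pstar. rewrite <- (exp_ln (a k i)) by (apply Hpos; auto). apply exp_le_mono; auto. }
  assert (Hhi : forall k, vle n pstar (b k)).
  { intros k i Hi. unfold pstar. rewrite <- (exp_ln (b k i)) by (apply Hpos; auto). apply exp_le_mono.
    specialize (Hd i Hi). unfold d in Hd. specialize (HbLB k i Hi). lra. }
  assert (Hbs : in_box n pmin pmax pstar) by (split; [apply (Hlo O)|apply (Hhi O)]).
  assert (HIlo : forall k, vle n (a k) (I pstar)).
  { intros [|k]. apply (proj1 (Hinv _ Hbs)). apply (anti pstar (b k)); auto; apply Hbox. }
  assert (HIhi : forall k, vle n (I pstar) (b k)).
  { intros [|k]. apply (proj2 (Hinv _ Hbs)). apply (anti (a k) pstar); auto; apply Hbox. }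
  exists pstar. split; auto. intros j Hj.
  assert (HIp : 0 < I pstar j) by (apply I_pos; auto; apply box_nonneg; auto).
  assert (H1 : LA j <= ln (I pstar j)).
  { apply (lim_le' (fun k => ln (a k j))); auto. intros k. apply ln_le_mono; [apply Hpos; auto|apply HIlo; auto]. }
  assert (H2 : ln (I pstar j) <= LB j).
  { apply (lim_ge' (fun k => ln (b k j))); auto. intros k. apply ln_le_mono; auto. apply HIhi; auto. }
  specialize (Hd j Hj). unfold d in Hd. rewrite <- (exp_ln (I pstar j)) by auto. change (pstar j) with (exp (LA j)). f_equal. lra.
Qed.
End Lip.

Lemma rprod_exp n (p s : vec) : (forall i, (i < n)%nat -> 0 < p i) ->
  rprod n (fun i => Rpower (p i) (s i)) = exp (rsum n (fun i => s i * ln (p i))).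
Proof.
  induction n; intros H; simpl. rewrite exp_0; auto.
  rewrite IHn by (intros; apply H; lia). unfold Rpower. rewrite exp_plus. reflexivity.
Qed.

Module MC.
From HB Require Import structures.
From mathcomp Require Import all_boot all_algebra.
From mathcomp Require Import perm Rstruct.
Import GRing.Theory.
Local Open Scope ring_scope.

Lemma rsum_big n (f : nat -> R) : rsum n f = \sum_(j < n) f j.
Proof. elim: n => [|n IH] /=; first by rewrite big_ord0. by rewrite big_ord_recr /= IH. Qed.

Lemma continuity_prod (I : finType) (F : I -> R -> R) (P : pred I) :
  (forall i, P i -> continuity (F i)) ->
  continuity (fun x => (\prod_(i | P i) ((F i) x))).
Proof.
move=> H; elim: (index_enum I)=> [|a l IHl].
  set f:= fun _ => _.
  have Hf: (fun x=> 1) =1 f by move=> x; rewrite /f big_nil.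
  by apply: (continuity_eq Hf); exact: continuity_const.
set f := fun _ => _.
case Hpa: (P a).
  have Hf: (fun x => F a x * \prod_(i <- l | P i) F i x) =1 f.
    by move=> x; rewrite /f big_cons Hpa.
  apply: (continuity_eq Hf); apply: continuity_mult=> //.
  exact: H.
have Hf: (fun x => \prod_(i <- l | P i) F i x) =1 f.
  by move=> x; rewrite /f big_cons Hpa.
exact: (continuity_eq Hf).
Qed.

Lemma det_cont k (F : R -> 'M[R]_k) :
  (forall a b, continuity (fun t => F t a b)) -> continuity (fun t => \det (F t)).
Proof.
move=> H.
have := @continuity_sum {perm 'I_k} (fun s t => (-1) ^+ perm.odd_perm s * \prod_i F t i (s i)) predT.
apply; move=> s _.
apply: continuity_mult; first exact: continuity_const.
by apply: continuity_prod => i _; apply: H.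
Qed.

Lemma mc_main n (B : nat -> nat -> R) (c : nat -> R) :
  (forall t v, Rle 0 t -> Rle t 1 ->
     (forall i, lt i n -> v i = Rmult t (rsum n (fun j => Rmult (B i j) (v j)))) ->
     forall i, lt i n -> v i = 0) ->
  exists (P : nat -> R -> R) (D : R -> R), continuity D /\ (forall i, continuity (P i)) /\
    (forall t, Rle 0 t -> Rle t 1 -> D t <> 0) /\
    (forall t i, lt i n ->
       Rminus (P i t) (Rmult t (rsum n (fun j => Rmult (B i j) (P j t)))) = Rmult (D t) (c i)).
Proof.
move=> HN.
pose MB := \matrix_(i < n, j < n) B i j : 'M[R]_n.
pose cv := \col_(i < n) c i : 'cV[R]_n.
pose M t := (1%:M - t *: MB) : 'M[R]_n.
pose D t := \det (M t).
pose y t := \adj (M t) *m cv.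
pose P i t := if (insub i : option 'I_n) is Some k then y t k ord0 else 0.
have Ment t a b : M t a b = (a == b)%:R - t * B a b by rewrite !mxE.
have Mcont a b : continuity (fun t => M t a b).
  apply: (continuity_eq (f := fun t => (a == b)%:R - t * B a b)) => [t|]; first by rewrite Ment.
  apply: continuity_minus; first exact: continuity_const.
  apply: continuity_mult; last exact: continuity_const. apply: derivable_continuous; exact: derivable_id.
have Hy t : y t - t *: (MB *m y t) = D t *: cv.
  have -> : y t - t *: (MB *m y t) = M t *m y t by rewrite mulmxBl mul1mx scalemxAl.
  by rewrite /y mulmxA mul_mx_adj mul_scalar_mx.
have Hrs (v : 'cV[R]_n) (i : 'I_n) :
   rsum n (fun j => B i j * (if (insub j : option 'I_n) is Some k then v k ord0 else 0))
   = (MB *m v) i ord0.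
  rewrite rsum_big !mxE; apply: eq_bigr => j _; by rewrite valK mxE.
exists P, D; split; [|split; [|split]].
- by apply: det_cont.
- move=> i; rewrite /P; case: insub => [k|]; last exact: continuity_const.
  apply: (continuity_eq (f := fun t => \sum_j \adj (M t) k j * cv j ord0)) => [t|].
    by rewrite /y !mxE.
  apply: continuity_sum => j _; apply: continuity_mult; last exact: continuity_const.
  apply: (continuity_eq (f := fun t => (-1) ^+ (j + k) * \det (row' j (col' k (M t))))) => [t|].
    by rewrite /adjugate !mxE.
  apply: continuity_mult; first exact: continuity_const.
  by apply: det_cont => a b; apply: (continuity_eq (f := fun t => M t (lift j a) (lift k b))) => [t|]; rewrite ?mxE.
- move=> t h0 h1 HD.
  have /det0P [v vn0 vM] : \det (M t)^T == 0 by rewrite det_tr; apply/eqP.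
  have Hv : v^T - t *: (MB *m v^T) = 0.
    have -> : v^T - t *: (MB *m v^T) = M t *m v^T by rewrite mulmxBl mul1mx scalemxAl.
    by rewrite -[M t]trmxK -trmx_mul vM trmx0.
  pose w i := if (insub i : option 'I_n) is Some k then v^T k ord0 else 0.
  have Hw : forall i, lt i n -> w i = 0.
    apply: (HN t w h0 h1) => i /ltP Hi.
    rewrite /w; case: insubP => [k _ vk|]; last by rewrite Hi.
    rewrite -vk (Hrs v^T k).
    have e : (v^T - t *: (MB *m v^T)) k ord0 = 0 by rewrite Hv mxE.
    move: e; rewrite !mxE => /eqP; rewrite subr_eq0 => /eqP ->.
    by [].
  move/negP: vn0; apply; apply/eqP/rowP => k; rewrite mxE.
  have /ltP kn := ltn_ord k.
  by have := Hw (val k) kn; rewrite /w valK mxE.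
- move=> t i /ltP Hi.
  rewrite /P; case: insubP => [k _ vk|]; last by rewrite Hi.
  rewrite -vk.
  have -> : rsum n (fun j => B k j * (if (insub j : option 'I_n) is Some k0 then y t k0 ord0 else 0)) = (MB *m y t) k ord0 by apply: Hrs.
  have e : (y t - t *: (MB *m y t)) k ord0 = (D t *: cv) k ord0 by rewrite Hy.
  by move: e; rewrite !mxE.
Qed.
End MC.
Set Bullet Behavior "Strict Subproofs".

Theorem mainTheorem4
  (n m : nat) (pmin pmax : vec) (I : vec -> vec) (B : mat) (c s : vec)
  (h : R -> vec)
  (Hm : (0 < m)%nat)
  (Hpmin : vlt n (vconst 0) pmin) (Hple : vle n pmin pmax)
  (HI : type_II_standard n I)
  (Hdiff : forall p, vlt n (vconst 0) p -> frechet_diff_at n I p)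
  (Hinv : forall p, in_box n pmin pmax p -> in_box n pmin pmax (I p))
  (HBub : forall i j, (i < n)%nat -> (j < n)%nat ->
     forall p l, in_box n pmin pmax p -> partial_deriv I j i p l ->
       Rabs (l * p i / I p j) <= B i j)
  (HBatt : forall i j, (i < n)%nat -> (j < n)%nat ->
     exists p l, in_box n pmin pmax p /\ partial_deriv I j i p l /\
       Rabs (l * p i / I p j) = B i j)
  (Hrho : spectral_radius_lt_1 n B)
  (Hc : vlt n (vconst 0) c)
  (Hh_der : forall k x, (k < m)%nat -> 0 < x ->
     exists d, 0 < d /\ derivable_pt_lim (fun t => h t k) x d)
  (Hh_incr : forall k x y, (k < m)%nat -> 0 < x -> x < y -> h x k < h y k)
  (Hs : forall i, (i < n)%nat -> s i - rsum n (fun j => B i j * s j) = c i)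
  (Hfeas : exists p, feasible n pmin pmax I p) :
  let kappa := fun p : vec => h (rprod n (fun i => Rpower (p i) (s i))) in
  exists pstar,
    in_box n pmin pmax pstar /\ veq n (I pstar) pstar /\
    (forall q, in_box n pmin pmax q -> veq n (I q) q -> veq n q pstar) /\
    (forall q, pareto_optimal n m pmin pmax I kappa q <-> veq n q pstar).
Proof.
  intros kappa.
  assert (HBnn : forall i j, (i < n)%nat -> (j < n)%nat -> 0 <= B i j).
  { intros i j Hi Hj. destruct (HBatt i j Hi Hj) as [p [l [_ [_ E]]]]. rewrite <- E. apply Rabs_pos. }
  assert (HN := N_of_rho n B Hrho).
  destruct (MC.mc_main n B c (fun t v h0 h1 => HN t v (conj h0 h1))) as [P [D [HDc [HPc [HD0 HPD]]]]].
  assert (Hsp := s_pos n B c s HN Hc HBnn Hs P D HDc HPc HD0 HPD).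
  assert (HSL : forall pstar p, in_box n pmin pmax pstar -> veq n (I pstar) pstar ->
    in_box n pmin pmax p -> vle n (I p) p -> ~ veq n p pstar ->
    rsum n (fun i => s i * ln (pstar i)) < rsum n (fun i => s i * ln (p i))).
  { intros pstar p H1 H2 H3 H4 H5. exact (SL n pmin pmax I B Hpmin HI Hdiff HBub c s HBnn Hc Hs Hsp pstar p H1 H2 H3 H4 H5). }
  assert (Hex : exists pstar, in_box n pmin pmax pstar /\ veq n (I pstar) pstar) by exact (exists_fix n pmin pmax I B Hpmin HI Hdiff HBub c s Hple Hinv HBnn Hc Hs Hsp).
  destruct Hex as [pstar [Hbs Hfix]].
  set (S := fun p : vec => rsum n (fun i => s i * ln (p i))).
  assert (Hk : forall p, in_box n pmin pmax p -> kappa p = h (exp (S p))).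
  { intros p Hp. unfold kappa, S. rewrite rprod_exp; auto. intros i Hi. apply (box_pos n pmin pmax Hpmin p Hp i Hi). }
  assert (Hfeas_s : vle n (I pstar) pstar) by (intros j Hj; rewrite Hfix; auto; lra).
  assert (Heqbox : forall q, veq n q pstar -> in_box n pmin pmax q).
  { intros q Hq. destruct Hbs as [H1 H2]. split; intros i Hi; rewrite Hq; auto. }
  exists pstar. split; auto. split; auto. split.
  - intros q Hbq Hfq. apply NNPP. intros Hne.
    assert (A1 := HSL pstar q Hbs Hfix Hbq ltac:(intros j Hj; rewrite Hfq; auto; lra) Hne).
    assert (A2 := HSL q pstar Hbq Hfq Hbs Hfeas_s ltac:(intros H; apply Hne; intros i Hi; rewrite H; auto)).
    lra.
  - intros q. split.
    + intros [[Hbq Hfq] Hno]. apply NNPP. intros Hne. apply Hno. exists pstar.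
      assert (A := HSL pstar q Hbs Hfix Hbq Hfq Hne). fold (S pstar) (S q) in A.
      assert (Ae : exp (S pstar) < exp (S q)) by (apply exp_increasing; auto).
      rewrite !Hk by auto.
      split; [split; auto|split].
      * intros k Hkm. apply Rlt_le, Hh_incr; auto. apply exp_pos.
      * intros Hv. specialize (Hv O Hm). assert (Hl := Hh_incr O _ _ Hm (exp_pos _) Ae). lra.
    + intros Hq. assert (Hbq := Heqbox q Hq).
      assert (HIq : forall j, (j < n)%nat -> I q j = I pstar j).
      { intros j Hj.
        assert (V1 : vle n q pstar) by (intros i Hi; rewrite Hq; auto; lra).
        assert (V2 : vle n pstar q) by (intros i Hi; rewrite Hq; auto; lra).
        assert (X1 := anti n pmin pmax I Hpmin HI _ _ Hbq Hbs V1 j Hj).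
        assert (X2 := anti n pmin pmax I Hpmin HI _ _ Hbs Hbq V2 j Hj). lra. }
      assert (HSq : S q = S pstar) by (unfold S; apply rsum_ext; intros i Hi; rewrite Hq; auto).
      split; [split; auto; intros j Hj; rewrite HIq, Hfix, Hq; auto; lra|].
      intros [q' [[Hb' Hf'] [Hle Hnv]]].
      destruct (classic (veq n q' pstar)) as [Hq'|Hq'].
      * apply Hnv. intros k Hkm. rewrite !Hk by auto.
        assert (S q' = S pstar) by (unfold S; apply rsum_ext; intros i Hi; rewrite Hq'; auto).
        rewrite H, HSq. reflexivity.
      * assert (A := HSL pstar q' Hbs Hfix Hb' Hf' Hq'). fold (S pstar) (S q') in A.
        assert (Ae : exp (S q) < exp (S q')) by (rewrite HSq; apply exp_increasing; auto).
        specialize (Hle O Hm). rewrite !Hk in Hle by auto.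
        assert (Hl := Hh_incr O _ _ Hm (exp_pos _) Ae). lra.
Qed.
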